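(* A connected simple graph $G=(V,E)$ supports at least one set-valued metric if and only if $G$ is bipartite.
   Context: For a connected simple graph $G=(V,E)$ and a set $\Omega$, a set-valued metric on $G$ is a function $\Omega(-,-):V\times V\to 2^{\Omega}$ such that $\Omega(x,y)=\Omega(y,x)$ for all $x,y$; $|\Omega(x,y)|=1$ whenever $\{x,y\}\in E$; and $\Omega(x,z)=\Omega(x,y)\triangle\Omega(y,z)$ for all $x,y,z$, where $\triangle$ is symmetric difference. *)

(* Defs.v *)
(* Subsets of an arbitrary set
   Omega are modelled as predicates Omega -> Prop (equality of subsets is
   Leibniz equality of predicates, i.e. extensional via funext/propext). *)
From mathcomp Require Import all_boot.
Set Implicit Arguments. Unset Strict Implicit. Unset Printing Implicit Defensive.

Definition simple_graph (T : finType) (e : rel T) : Prop :=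
  symmetric e /\ irreflexive e.

Definition connected_graph (T : finType) (e : rel T) : Prop :=
  forall x y : T, connect e x y.

Definition bipartite (T : finType) (e : rel T) : Prop :=
  exists c : T -> bool, forall x y, e x y -> c x != c y.

Definition symdiff (Omega : Type) (A B : Omega -> Prop) : Omega -> Prop :=
  fun w => (A w /\ ~ B w) \/ (B w /\ ~ A w).

Definition is_singleton (Omega : Type) (A : Omega -> Prop) : Prop :=
  exists w : Omega, A = (fun v => v = w).

Definition set_valued_metric (T : finType) (e : rel T) (Omega : Type)
    (d : T -> T -> (Omega -> Prop)) : Prop :=
  [/\ (forall x y, d x y = d y x),
      (forall x y, e x y -> is_singleton (d x y)) &
      (forall x y z, d x z = symdiff (d x y) (d y z))].

Definition supports_set_valued_metric (T : finType) (e : rel T) : Prop :=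
  exists (Omega : Type) (d : T -> T -> (Omega -> Prop)),
    set_valued_metric e d.

(* Main.v *)
Require Import Defs.
From mathcomp Require Import all_boot.
From Stdlib Require Import Classical ClassicalEpsilon FunctionalExtensionality PropExtensionality.

Section Aux.
Variable Omega : Type.

Definition Sl (ws : seq Omega) : Omega -> Prop :=
  foldr (fun w A => symdiff (fun v => v = w) A) (fun _ => False) ws.

Lemma Sl_cat ws1 ws2 v : Sl (ws1 ++ ws2) v <-> symdiff (Sl ws1) (Sl ws2) v.
Proof.
elim: ws1 => [|a r IH] /=; unfold symdiff.
  destruct (classic (Sl ws2 v)); tauto.
unfold symdiff in IH; rewrite IH.
destruct (classic (Sl r v)), (classic (Sl ws2 v)), (classic (v = a)); tauto.
Qed.

Lemma Sl_remove rest w : Sl rest w -> exists rest', (size rest').+1 = size rest /\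
  forall v, Sl rest v <-> symdiff (fun u => u = w) (Sl rest') v.
Proof.
elim: rest => [|a r IH] /=; first by [].
unfold symdiff at 1; move=> H.
destruct (classic (w = a)) as [->|Hne].
  exists r; split => //.
move: H => [[Hwa _]|[Hr _]]; first by [].
have [r' [Hs Hr']] := IH Hr.
exists (a :: r'); split; first by rewrite /= Hs.
move=> v /=; unfold symdiff in *; rewrite Hr'.
destruct (classic (Sl r' v)), (classic (v = w)), (classic (v = a)); tauto.
Qed.

Lemma odd_nonempty n : forall ws, size ws = n -> odd n -> exists w, Sl ws w.
Proof.
elim: n {-2}n (leqnn n) => [|n IH] m Hm ws Hs Ho.
  by move: Hm Ho; rewrite leqn0 => /eqP ->.
case: ws Hs => [|a r] /= Hs; first by move: Ho; rewrite -Hs.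
destruct (classic (Sl r a)) as [Hr|Hr]; last first.
  by exists a; left; split.
have [r' [Hs' Hr']] := @Sl_remove r a Hr.
have Hsz : size r' = m.-2 by rewrite -Hs -Hs'.
have [w Hw] : exists w, Sl r' w.
  apply: (IH m.-2) => //.
    by move: Hm; case: m {Hs Hsz Ho} => [|[|m]] //= Hm; rewrite ltnS in Hm; exact: ltnW.
  move: Ho Hs Hs'; case: m {Hsz Hm} => [|[|m]] //=; first by case: r {Hr Hr'} => //=; case: r' {Hr' }. 
  by move=> Ho _ _; rewrite negbK in Ho.
exists w; unfold symdiff in *.
destruct (classic (w = a)) as [->|]; last first.
  right; split => //; apply/Hr'; right; split => //.
have := Hr' a; destruct (classic (Sl r a)); tauto.
Qed.

Lemma parity_unique (A : Omega -> Prop) ws1 ws2 :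
  (forall v, A v <-> Sl ws1 v) -> (forall v, A v <-> Sl ws2 v) ->
  odd (size ws1) = odd (size ws2).
Proof.
move=> H1 H2.
case E1: (odd (size ws1)); case E2: (odd (size ws2)) => //; exfalso;
have Ho : odd (size (ws1 ++ ws2)) by rewrite size_cat oddD E1 E2.
all: have [w Hw] := odd_nonempty (size (ws1 ++ ws2)) (ws1 ++ ws2) erefl Ho.
all: move/Sl_cat: Hw; unfold symdiff; rewrite -H1 -H2; tauto.
Qed.
End Aux.
Arguments Sl {Omega}.
Arguments parity_unique {Omega A ws1 ws2}.

Theorem proposition3p4 (T : finType) (e : rel T) :
  simple_graph e -> connected_graph e ->
  (supports_set_valued_metric e <-> bipartite e).
Proof.
move=> [e_sym e_irr] conn; split.
- move=> [Omega [d [dsym dedge dtri]]].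
  have ddiag : forall a v, ~ d a a v.
    move=> a v H; have := dtri a a a; move/(f_equal (fun f => f v)).
    unfold symdiff => E; rewrite E in H; tauto.
  have rep : forall p a, path e a p -> exists ws, forall v, d a (last a p) v <-> Sl ws v.
    elim=> [|b p IH] a /=.
      move=> _; exists (@nil Omega) => v /=; split => //; apply: ddiag.
    move=> /andP [Hab Hp]; have [ws Hws] := IH b Hp.
    have [w Hw] := dedge _ _ Hab.
    exists (w :: ws) => v /=; rewrite (dtri a b) Hw /symdiff Hws; tauto.
  have rep' : forall a x, exists ws, forall v, d a x v <-> Sl ws v.
    by move=> a x; have /connectP [p Hp ->] := conn a x; apply: rep.
  case: (pickP (@predT T)) => [r _|H0]; last first.
    by exists (fun _ => true) => x; have := H0 x.
  pose P x := exists ws, (forall v, d r x v <-> Sl ws v) /\ ~~ odd (size ws).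
  exists (fun x => if excluded_middle_informative (P x) then true else false).
  move=> x y Hxy.
  have [w Hw] := dedge _ _ Hxy.
  have step : forall ws, (forall v, d r x v <-> Sl ws v) ->
      forall v, d r y v <-> Sl (w :: ws) v.
    by move=> ws H v /=; rewrite (dtri r x) Hw /symdiff H; tauto.
  case: excluded_middle_informative => [[ws [Hws Hev]]|Hnx];
    case: excluded_middle_informative => [[ws' [Hws' Hev']]|Hny] //.
  + have := parity_unique Hws' (step _ Hws).
    by rewrite /= (negbTE Hev') => /esym; rewrite (negbTE Hev).
  + have [ws Hws] := rep' r x.
    case/boolP: (odd (size ws)) => Ho; last by exfalso; apply: Hnx; exists ws.
    exfalso; apply: Hny; exists (w :: ws); split; first exact: step.
    by rewrite /= Ho.
- move=> [c Hc].
  exists unit, (fun x y => fun _ => is_true (c x != c y)); split.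
  + by move=> x y; rewrite eq_sym.
  + move=> x y /Hc H; exists tt; apply: functional_extensionality => -[].
    apply: propositional_extensionality; split => // _; exact: H.
  + move=> x y z; apply: functional_extensionality => -[].
    apply: propositional_extensionality; unfold symdiff.
    by case: (c x); case: (c y); case: (c z); intuition.
Qed.
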